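(* The prime $p = 67$ is the unique prime $p < 2000$ with the following property: there is no irrational real number $\xi$ such that the simple continued fraction expansions of $\xi$ and of $p\xi$ both consist, from some point on, only of the terms $1$ and $2$. *)

(* Defs.v *)
From Stdlib Require Import Reals ZArith Znumtheory.
Open Scope R_scope.

(* floor of a real number: Int_part r = up r - 1 = floor r *)
Definition rfloor (x : R) : Z := Int_part x.

Fixpoint cf_complete (x : R) (n : nat) : R :=
  match n with
  | O => x
  | S m => / (cf_complete x m - IZR (rfloor (cf_complete x m)))
  end.

(* n-th partial quotient a_n = floor x_n (well defined for all n when x is
   irrational). *)
Definition cf_term (x : R) (n : nat) : Z := rfloor (cf_complete x n).

Definition irrational (x : R) : Prop :=
  ~ exists (a b : Z), b <> 0%Z /\ x = IZR a / IZR b.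

Definition eventually_1_2 (x : R) : Prop :=
  exists N : nat, forall n : nat, (N <= n)%nat ->
    cf_term x n = 1%Z \/ cf_term x n = 2%Z.

(* Main.v *)
Require Import Defs.
From Stdlib Require Import Reals ZArith Znumtheory.
From Stdlib Require Import Lia Lra Psatz List Bool.
Import ListNotations.
Open Scope R_scope.

Lemma rfloor_spec : forall x k, IZR k <= x < IZR k + 1 -> rfloor x = k.
Proof.
  intros x k [H1 H2]. unfold rfloor, Int_part.
  assert (up x = (k+1)%Z) as E.
  { symmetry. apply tech_up; rewrite plus_IZR; simpl; lra. }
  rewrite E. lia.
Qed.

Lemma rfloor_bounds : forall x, IZR (rfloor x) <= x /\ x < IZR (rfloor x) + 1.
Proof.
  intros x. unfold rfloor. destruct (base_Int_part x). lra.
Qed.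

Lemma cf_S : forall x n, cf_complete x (S n) = / (cf_complete x n - IZR (cf_term x n)).
Proof. reflexivity. Qed.

Lemma rfloor_0 : rfloor 0 = 0%Z.
Proof. apply rfloor_spec. simpl; lra. Qed.

Lemma cf_zero : forall x n j, cf_complete x n = 0 -> cf_complete x (n + j) = 0.
Proof.
  intros x n j H. induction j.
  - rewrite Nat.add_0_r; auto.
  - rewrite Nat.add_succ_r, cf_S. unfold cf_term. rewrite IHj, rfloor_0.
    simpl. rewrite Rminus_0_r. apply Rinv_0.
Qed.

Lemma cf_shift : forall x n, cf_complete x (S n) = cf_complete (cf_complete x 1) n.
Proof.
  intros x n. induction n.
  - reflexivity.
  - rewrite cf_S. unfold cf_term. rewrite IHn. reflexivity.
Qed.

Lemma cf_shift_gen : forall x n m, cf_complete x (n + m) = cf_complete (cf_complete x n) m.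
Proof.
  intros x n. revert x. induction n; intros x m.
  - reflexivity.
  - simpl plus. rewrite cf_shift. rewrite IHn. rewrite <- cf_shift. reflexivity.
Qed.

Lemma frac_nz : forall z, eventually_1_2 z -> forall k,
  cf_complete z k - IZR (cf_term z k) <> 0.
Proof.
  intros z [N HN] k H.
  assert (H0 : cf_complete z (S k) = 0).
  { rewrite cf_S, H. apply Rinv_0. }
  destruct (HN (S k + N)%nat) as [E|E]; try lia;
  unfold cf_term in E; rewrite (cf_zero _ _ _ H0), rfloor_0 in E; discriminate.
Qed.

Lemma frac_facts : forall z, eventually_1_2 z -> forall k,
  0 < cf_complete z k - IZR (cf_term z k) < 1 /\
  cf_complete z (S k) * (cf_complete z k - IZR (cf_term z k)) = 1 /\
  1 < cf_complete z (S k).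
Proof.
  intros z Hz k. pose proof (frac_nz z Hz k) as Hnz.
  destruct (rfloor_bounds (cf_complete z k)) as [B1 B2].
  unfold cf_term in *.
  assert (0 < cf_complete z k - IZR (rfloor (cf_complete z k)) < 1) by lra.
  split; [auto|]. rewrite cf_S. unfold cf_term. split.
  - field. auto.
  - rewrite <- Rinv_1. apply Rinv_lt_contravar; lra.
Qed.

Lemma rat_term : forall (s : nat) x a b, (0 < b)%Z -> (Z.to_nat b <= s)%nat ->
  x = IZR a / IZR b -> exists n, cf_complete x n = 0.
Proof.
  induction s; intros x a b Hb Hs Hx.
  - lia.
  - assert (Hdm := Z.div_mod a b ltac:(lia)).
    assert (Hm := Z.mod_pos_bound a b Hb).
    set (k := (a / b)%Z) in *. set (r := (a mod b)%Z) in *.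
    assert (Hfl : rfloor x = k).
    { apply rfloor_spec. rewrite Hx. assert (IZR a = IZR b * IZR k + IZR r) as Ea.
      { rewrite <- mult_IZR, <- plus_IZR. f_equal. lia. }
      assert (0 <= IZR r < IZR b) by (split; apply IZR_le || apply IZR_lt; lia).
      assert (0 < IZR b) by (apply IZR_lt; lia).
      rewrite Ea. split.
      + apply Rmult_le_reg_r with (IZR b); auto. field_simplify; try lra.
      + apply Rmult_lt_reg_r with (IZR b); auto. field_simplify; try lra. }
    destruct (Z.eq_dec r 0) as [Hr|Hr].
    + exists 1%nat. rewrite cf_S. unfold cf_term. simpl. rewrite Hfl.
      assert (x = IZR k) as ->.
      { rewrite Hx. assert (IZR a = IZR b * IZR k) as ->.
        { rewrite <- mult_IZR. f_equal. lia. }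
        field. apply not_0_IZR; lia. }
      rewrite Rminus_diag. apply Rinv_0.
    + destruct (IHs (cf_complete x 1) b r ltac:(lia) ltac:(lia)) as [n Hn].
      * rewrite cf_S. unfold cf_term. simpl. rewrite Hfl, Hx.
        assert (IZR a = IZR b * IZR k + IZR r) as ->.
        { rewrite <- mult_IZR, <- plus_IZR. f_equal. lia. }
        field. split; apply not_0_IZR; lia.
      * exists (S n). rewrite cf_shift. auto.
Qed.

Lemma ev12_irrational : forall z, eventually_1_2 z -> irrational z.
Proof.
  intros z Hz [a [b [Hb Hx]]].
  assert (exists n, cf_complete z n = 0) as [n Hn].
  { destruct (Z_lt_le_dec 0 b).
    - eapply (rat_term (Z.to_nat b)); eauto.
    - apply (rat_term (Z.to_nat (-b)) z (-a) (-b)); try lia.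
      rewrite Hx, !opp_IZR. field. apply not_0_IZR; auto. }
  destruct Hz as [N HN].
  destruct (HN (n + N)%nat) as [E|E]; try lia;
  unfold cf_term in E; rewrite (cf_zero _ _ _ Hn), rfloor_0 in E; discriminate.
Qed.

Fixpoint zall (lo : Z) (n : nat) (f : Z -> bool) : bool :=
  match n with O => true | S n' => f lo && zall (lo + 1)%Z n' f end.

Lemma zall_spec : forall n lo f, zall lo n f = true ->
  forall z, (lo <= z < lo + Z.of_nat n)%Z -> f z = true.
Proof.
  induction n; intros lo f H z Hz; simpl in *; [lia|].
  apply andb_true_iff in H as [H1 H2].
  destruct (Z.eq_dec z lo); [subst; auto|]. apply (IHn (lo + 1)%Z); auto. lia.
Qed.


Definition qfloor (D P Q : Z) : Z :=
  let s := Z.sqrt D in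
  if (0 <? Q)%Z then ((P + s) / Q)%Z else ((- P - s - 1) / (- Q))%Z.
Definition qstep (D : Z) (st : Z * Z) : Z * Z :=
  let (P, Q) := st in
  let a := qfloor D P Q in
  let P' := (a * Q - P)%Z in (P', ((D - P' * P') / Q)%Z).
Definition qval (D : Z) (st : Z * Z) : R :=
  (IZR (fst st) + sqrt (IZR D)) / IZR (snd st).
Fixpoint qiter (D : Z) (n : nat) (st : Z * Z) : Z * Z :=
  match n with O => st | S n' => qstep D (qiter D n' st) end.
Definition qinv (D : Z) (st : Z * Z) : Prop :=
  snd st <> 0%Z /\ ((D - fst st * fst st) mod snd st = 0)%Z.

Lemma nonsq : forall D, (0 <= D)%Z -> (Z.sqrt D * Z.sqrt D <> D)%Z ->
  forall t, (t * t <> D)%Z.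
Proof.
  intros D HD Hs t Ht. apply Hs. rewrite <- Ht.
  replace (t * t)%Z with (Z.abs t * Z.abs t)%Z by lia.
  rewrite Z.sqrt_square; lia.
Qed.

Lemma sqrt_facts : forall D, (0 < D)%Z -> (Z.sqrt D * Z.sqrt D <> D)%Z ->
  let r := sqrt (IZR D) in
  r * r = IZR D /\ IZR (Z.sqrt D) < r < IZR (Z.sqrt D) + 1 /\
  forall t, r <> IZR t.
Proof.
  intros D HD Hs r.
  assert (Hr : r * r = IZR D) by (apply sqrt_sqrt; apply IZR_le; lia).
  assert (Hr0 : 0 <= r) by apply sqrt_pos.
  assert (Hne : forall t, r <> IZR t).
  { intros t Ht. apply (nonsq D ltac:(lia) Hs t). apply eq_IZR.
    rewrite mult_IZR, <- Ht. auto. }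
  pose proof (Z.sqrt_spec D ltac:(lia)) as [S1 S2].
  set (s := Z.sqrt D) in *.
  assert (0 <= s)%Z by (apply Z.sqrt_nonneg).
  assert (E1 : IZR (s * s) <= IZR D) by (apply IZR_le; lia).
  assert (E2 : IZR D < IZR (Z.succ s * Z.succ s)) by (apply IZR_lt; lia).
  rewrite mult_IZR in E1. rewrite mult_IZR, succ_IZR in E2.
  assert (0 <= IZR s) by (apply IZR_le; lia).
  split; auto. split; [split|auto].
  - destruct (Rle_lt_dec r (IZR s)); auto.
    + destruct (Rle_lt_or_eq _ _ r0); [nra|]. exfalso; apply (Hne s); auto.
  - nra.
Qed.

Lemma div_bounds_pos : forall Q t k, 0 < Q -> k * Q <= t -> t < (k + 1) * Q ->
  k <= t / Q < k + 1.
Proof.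
  intros Q t k HQ H1 H2. split.
  - apply Rmult_le_reg_r with Q; auto. unfold Rdiv. rewrite Rmult_assoc, Rinv_l; lra.
  - apply Rmult_lt_reg_r with Q; auto. unfold Rdiv. rewrite Rmult_assoc, Rinv_l; lra.
Qed.

Lemma qfloor_ok : forall D P Q, (0 < D)%Z -> (Z.sqrt D * Z.sqrt D <> D)%Z ->
  Q <> 0%Z -> rfloor (qval D (P, Q)) = qfloor D P Q.
Proof.
  intros D P Q HD Hs HQ. destruct (sqrt_facts D HD Hs) as [Hr [[L1 L2] Hne]].
  unfold qval, qfloor; simpl. set (r := sqrt (IZR D)) in *.
  set (s := Z.sqrt D) in *.
  destruct (Z.ltb_spec 0 Q).
  - apply rfloor_spec. set (k := ((P + s) / Q)%Z).
    assert (K1 : (k * Q <= P + s)%Z) by (rewrite Z.mul_comm; apply Z.mul_div_le; lia).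
    assert (K2 : (P + s + 1 <= (k + 1) * Q)%Z).
    { pose proof (Z.mul_succ_div_gt (P + s) Q ltac:(lia)). unfold Z.succ in *. lia. }
    apply IZR_le in K1. apply IZR_le in K2.
    rewrite mult_IZR, plus_IZR in K1. rewrite mult_IZR, !plus_IZR in K2. simpl in K2.
    apply div_bounds_pos; [apply IZR_lt; lia | lra | lra].
  - apply rfloor_spec. set (k := ((- P - s - 1) / - Q)%Z).
    assert (K1 : (k * - Q <= - P - s - 1)%Z) by (rewrite Z.mul_comm; apply Z.mul_div_le; lia).
    assert (K2 : (- P - s <= (k + 1) * - Q)%Z).
    { pose proof (Z.mul_succ_div_gt (- P - s - 1) (- Q) ltac:(lia)). unfold Z.succ in *. lia. }
    apply IZR_le in K1. apply IZR_le in K2.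
    rewrite ?mult_IZR, ?minus_IZR, ?plus_IZR, ?opp_IZR in K1.
    rewrite ?mult_IZR, ?minus_IZR, ?plus_IZR, ?opp_IZR in K2.
    rewrite ?minus_IZR, ?opp_IZR in K2. simpl in K1, K2.
    replace ((IZR P + r) / IZR Q) with ((- IZR P - r) / (- IZR Q)) by (field; apply not_0_IZR; auto).
    apply div_bounds_pos; [apply Ropp_0_gt_lt_contravar; apply IZR_lt; lia | lra | lra].
Qed.

Lemma surd_inv_real : forall r P Q P' Q' a : R, Q <> 0 -> Q' <> 0 -> r - P' <> 0 ->
  P' = a * Q - P -> r * r - P' * P' = Q' * Q -> (P' + r) / Q' = / ((P + r) / Q - a).
Proof.
  intros r P Q P' Q' a HQ HQ' Hr EP ER.
  replace ((P + r) / Q - a) with ((r - P') / Q) by (rewrite EP; field; auto).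
  rewrite Rinv_div.
  apply Rmult_eq_reg_r with (Q' * (r - P')).
  2:{ apply Rmult_integral_contrapositive; split; auto. }
  replace ((P' + r) / Q' * (Q' * (r - P'))) with ((P' + r) * (r - P')) by (field; auto).
  replace (Q / (r - P') * (Q' * (r - P'))) with (Q * Q') by (field; auto).
  nra.
Qed.

Lemma qstep_ok : forall D st, (0 < D)%Z -> (Z.sqrt D * Z.sqrt D <> D)%Z ->
  qinv D st ->
  qinv D (qstep D st) /\ qval D (qstep D st) = / (qval D st - IZR (qfloor D (fst st) (snd st))).
Proof.
  intros D [P Q] HD Hs [HQ Hm]. cbn [fst snd] in HQ, Hm |- *.
  destruct (sqrt_facts D HD Hs) as [Hr [_ Hne]].
  unfold qstep. set (a := qfloor D P Q). set (P' := (a * Q - P)%Z).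
  apply Z.mod_divide in Hm; auto. destruct Hm as [t Ht].
  set (Q' := ((D - P' * P') / Q)%Z).
  assert (E : (D - P' * P' = (t + 2 * a * P - a * a * Q) * Q)%Z) by (unfold P'; lia).
  assert (Ediv : (Q' = t + 2 * a * P - a * a * Q)%Z).
  { unfold Q'. rewrite E. apply Z.div_mul; auto. }
  assert (E2 : (D - P' * P' = Q' * Q)%Z) by lia.
  assert (HQ' : (Q' <> 0)%Z).
  { intro H0. rewrite H0 in E2. apply (nonsq D ltac:(lia) Hs P'). lia. }
  clearbody Q'. split.
  - unfold qinv; cbn [fst snd]. split; auto.
    rewrite E2, Z.mul_comm. apply Z.mod_mul. auto.
  - unfold qval; cbn [fst snd].
    apply surd_inv_real.
    + apply not_0_IZR; auto.
    + apply not_0_IZR; auto.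
    + intro; apply (Hne P'); lra.
    + unfold P'. rewrite minus_IZR, mult_IZR. auto.
    + rewrite Hr. rewrite <- !mult_IZR, <- minus_IZR. f_equal. auto.
Qed.

Lemma qiter_ok : forall D st0, (0 < D)%Z -> (Z.sqrt D * Z.sqrt D <> D)%Z ->
  qinv D st0 -> forall n,
  qinv D (qiter D n st0) /\ cf_complete (qval D st0) n = qval D (qiter D n st0).
Proof.
  intros D st0 HD Hs H0 n. induction n.
  - simpl; auto.
  - destruct IHn as [I1 I2]. cbn [qiter].
    destruct (qstep_ok D (qiter D n st0) HD Hs I1) as [J1 J2]. split; auto.
    rewrite cf_S. unfold cf_term. rewrite I2, J2.
    destruct (qiter D n st0) as [P Q] eqn:EQ. simpl.
    rewrite qfloor_ok; auto. destruct I1; auto.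
Qed.

Lemma qiter_add : forall D j n st, qiter D (j + n) st = qiter D j (qiter D n st).
Proof. intros D j n st. induction j; simpl; auto. rewrite IHj. auto. Qed.

Fixpoint win_ok (D : Z) (L : nat) (st : Z * Z) : bool :=
  match L with
  | O => true
  | S L' => let a := qfloor D (fst st) (snd st) in
            ((a =? 1)%Z || (a =? 2)%Z) && win_ok D L' (qstep D st)
  end.

Lemma win_ok_spec : forall D L st, win_ok D L st = true -> forall j, (j < L)%nat ->
  let st' := qiter D j st in
  qfloor D (fst st') (snd st') = 1%Z \/ qfloor D (fst st') (snd st') = 2%Z.
Proof.
  intros D L. induction L; intros st H j Hj; simpl in *.
  - lia.
  - apply andb_true_iff in H. destruct H as [H1 H2].
    destruct j.
    + simpl. apply orb_true_iff in H1. destruct H1 as [H1|H1]; apply Z.eqb_eq in H1; auto.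
    + replace (S j) with (j + 1)%nat by lia. rewrite qiter_add. simpl.
      apply IHL; auto. lia.
Qed.

Definition pair_eqb (a b : Z * Z) : bool := ((fst a =? fst b) && (snd a =? snd b))%Z.

Definition surd_ok (D P Q : Z) (N L : nat) : bool :=
  (0 <? D)%Z && negb (Z.sqrt D * Z.sqrt D =? D)%Z && negb (Q =? 0)%Z &&
  ((D - P * P) mod Q =? 0)%Z && (0 <? L)%nat &&
  (let sN := qiter D N (P, Q) in win_ok D L sN && pair_eqb (qiter D L sN) sN).

Lemma surd_ok_sound : forall D P Q N L, surd_ok D P Q N L = true ->
  eventually_1_2 (qval D (P, Q)).
Proof.
  intros D P Q N L H. unfold surd_ok in H.
  repeat rewrite andb_true_iff in H.
  destruct H as [[[[[H1 H2] H3] H4] H5] [H6 H7]].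
  apply Z.ltb_lt in H1. apply negb_true_iff, Z.eqb_neq in H2.
  apply negb_true_iff, Z.eqb_neq in H3. apply Z.eqb_eq in H4. apply Nat.ltb_lt in H5.
  unfold pair_eqb in H7. apply andb_true_iff in H7. destruct H7 as [H7 H8].
  apply Z.eqb_eq in H7. apply Z.eqb_eq in H8.
  set (sN := qiter D N (P, Q)) in *.
  assert (Hper : qiter D L sN = sN).
  { destruct (qiter D L sN), sN; simpl in *; subst; auto. }
  assert (Hperk : forall k j, qiter D (j + k * L) sN = qiter D j sN).
  { intros k. induction k; intros j.
    - rewrite Nat.mul_0_l, Nat.add_0_r. auto.
    - replace (j + S k * L)%nat with ((j + k * L) + L)%nat by lia.
      rewrite qiter_add, Hper. auto. }
  exists N. intros n Hn.
  assert (Hinv : qinv D (P, Q)) by (split; simpl; auto).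
  destruct (qiter_ok D (P, Q) H1 H2 Hinv n) as [I1 I2].
  unfold cf_term. rewrite I2.
  destruct (qiter D n (P, Q)) as [P1 Q1] eqn:E1.
  rewrite qfloor_ok; auto; [|destruct I1; auto].
  replace n with ((n - N) mod L + ((n - N) / L) * L + N)%nat in E1.
  2:{ pose proof (Nat.div_mod_eq (n - N) L). lia. }
  rewrite qiter_add in E1. fold sN in E1. rewrite Hperk in E1.
  assert (HL : L <> 0%nat) by lia.
  pose proof (win_ok_spec D L sN H6 ((n - N) mod L) (Nat.mod_upper_bound _ _ HL)) as W.
  simpl in W. rewrite E1 in W. simpl in W. auto.
Qed.

Lemma qval_scale : forall p D P Q, (0 < p)%Z -> (0 <= D)%Z ->
  IZR p * qval D (P, Q) = qval (p * p * D)%Z ((p * P)%Z, Q).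
Proof.
  intros p D P Q Hp HD. unfold qval; simpl.
  rewrite !mult_IZR. rewrite sqrt_mult_alt.
  2:{ apply Rle_0_sqr. }
  rewrite sqrt_square. 2:{ apply IZR_le; lia. }
  unfold Rdiv. ring.
Qed.


Fixpoint conv (z : R) (n : nat) : Z * Z * Z * Z :=
  match n with
  | O => (1, 0, 0, 1)%Z
  | S n' => let '(p, p', q, q') := conv z n' in
            let a := cf_term z n' in ((a * p + p')%Z, p, (a * q + q')%Z, q)
  end.
Definition cp z n := let '(p, _, _, _) := conv z n in p.
Definition cp' z n := let '(_, p', _, _) := conv z n in p'.
Definition cq z n := let '(_, _, q, _) := conv z n in q.
Definition cq' z n := let '(_, _, _, q') := conv z n in q'.

Lemma conv_S_eqs : forall z n,
  cp z (S n) = (cf_term z n * cp z n + cp' z n)%Z /\ cp' z (S n) = cp z n /\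
  cq z (S n) = (cf_term z n * cq z n + cq' z n)%Z /\ cq' z (S n) = cq z n.
Proof.
  intros z n. unfold cp, cp', cq, cq'. simpl.
  destruct (conv z n) as [[[p p'] q] q']. repeat split; reflexivity.
Qed.

Lemma conv_rel : forall z, eventually_1_2 z -> forall n,
  z * (IZR (cq z n) * cf_complete z n + IZR (cq' z n)) =
  IZR (cp z n) * cf_complete z n + IZR (cp' z n).
Proof.
  intros z Hz n. induction n.
  - unfold cq, cq', cp, cp'. simpl. ring.
  - destruct (conv_S_eqs z n) as [E1 [E2 [E3 E4]]].
    rewrite E1, E2, E3, E4. rewrite !plus_IZR, !mult_IZR.
    destruct (frac_facts z Hz n) as [_ [F _]].
    set (x := cf_complete z n) in *. set (x' := cf_complete z (S n)) in *.
    set (a := IZR (cf_term z n)) in *.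
    set (p := IZR (cp z n)) in *. set (p' := IZR (cp' z n)) in *.
    set (q := IZR (cq z n)) in *. set (q' := IZR (cq' z n)) in *.
    assert (Id : z * ((a * q + q') * x' + q) - ((a * p + p') * x' + p) =
      x' * (z * (q * x + q') - (p * x + p')) - (z * q - p) * (x' * (x - a) - 1)) by ring.
    rewrite IHn, F in Id. lra.
Qed.

Lemma conv_det : forall z n,
  (cp z n * cq' z n - cp' z n * cq z n = 1 \/ cp z n * cq' z n - cp' z n * cq z n = -1)%Z.
Proof.
  intros z n. induction n.
  - unfold cq, cq', cp, cp'. simpl. auto.
  - destruct (conv_S_eqs z n) as [E1 [E2 [E3 E4]]].
    rewrite E1, E2, E3, E4. lia.
Qed.

Lemma digit_ge1 : forall z, eventually_1_2 z -> forall k, (1 <= k)%nat -> (1 <= cf_term z k)%Z.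
Proof.
  intros z Hz k Hk. destruct k; [lia|].
  destruct (frac_facts z Hz k) as [_ [_ G]].
  destruct (rfloor_bounds (cf_complete z (S k))) as [_ B].
  unfold cf_term.
  assert (H : 0 < IZR (rfloor (cf_complete z (S k)))) by lra.
  apply lt_IZR in H. lia.
Qed.

Lemma cq_facts : forall z, eventually_1_2 z -> forall n, (1 <= n)%nat ->
  (1 <= cq z n /\ 0 <= cq' z n <= cq z n)%Z.
Proof.
  intros z Hz n Hn. destruct n; [lia|]. clear Hn. induction n.
  - unfold cq, cq'. simpl. lia.
  - destruct (conv_S_eqs z (S n)) as [_ [_ [E3 E4]]]. rewrite E3, E4.
    pose proof (digit_ge1 z Hz (S n) ltac:(lia)). nia.
Qed.

Lemma cq_grow : forall z, eventually_1_2 z -> forall n, (2 <= n)%nat ->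
  (Z.of_nat n - 1 <= cq z n /\ 1 <= cq' z n)%Z.
Proof.
  intros z Hz n Hn. induction n; [lia|].
  destruct (conv_S_eqs z n) as [_ [_ [E3 E4]]]. rewrite E3, E4.
  destruct (Nat.eq_dec n 1) as [->|Hn1].
  - pose proof (digit_ge1 z Hz 1 ltac:(lia)). unfold cq, cq'. simpl. lia.
  - specialize (IHn ltac:(lia)). pose proof (digit_ge1 z Hz n ltac:(lia)).
    pose proof (cq_facts z Hz n ltac:(lia)). nia.
Qed.

Lemma cq_upper : forall z, eventually_1_2 z -> forall n, (1 <= n)%nat ->
  (cf_term z n = 1 \/ cf_term z n = 2)%Z -> (cq z (S n) <= 3 * cq z n)%Z.
Proof.
  intros z Hz n Hn Hd. destruct (conv_S_eqs z n) as [_ [_ [E3 _]]]. rewrite E3.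
  pose proof (cq_facts z Hz n Hn). destruct Hd as [D|D]; rewrite D; lia.
Qed.

Lemma tail_facts : forall z N, eventually_1_2 z ->
  (forall n, (N <= n)%nat -> cf_term z n = 1%Z \/ cf_term z n = 2%Z) ->
  forall k, (N <= k)%nat ->
  15/11 < cf_complete z k < 11/4 /\ (cf_term z k = 1%Z \/ cf_term z k = 2%Z) /\
  cf_complete z (S k) * (cf_complete z k - IZR (cf_term z k)) = 1.
Proof.
  intros z N Hz HN.
  assert (S1 : forall j, (N <= j)%nat -> 1 <= IZR (cf_term z j) <= 2).
  { intros j Hj. destruct (HN j Hj) as [E|E]; rewrite E; simpl; lra. }
  assert (S2 : forall j, (N <= j)%nat -> cf_complete z j < 3).
  { intros j Hj. destruct (rfloor_bounds (cf_complete z j)). pose proof (S1 j Hj).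
    unfold cf_term in *. lra. }
  assert (Fr : forall j, cf_complete z (S j) * (cf_complete z j - IZR (cf_term z j)) = 1 /\
     0 < cf_complete z j - IZR (cf_term z j) /\ 1 < cf_complete z (S j)).
  { intros j. destruct (frac_facts z Hz j) as [[A1 _] [A2 A3]]. auto. }
  assert (S3 : forall j, (N <= j)%nat -> 4/3 < cf_complete z j).
  { intros j Hj. destruct (Fr j) as [F1 [F2 F3]]. pose proof (S2 (S j) ltac:(lia)).
    pose proof (S1 j Hj). nra. }
  assert (S4 : forall j, (N <= j)%nat -> cf_complete z j < 11/4).
  { intros j Hj. destruct (Fr j) as [F1 [F2 F3]]. pose proof (S3 (S j) ltac:(lia)).
    pose proof (S1 j Hj). nra. }
  intros k Hk. split; [split|split].
  - destruct (Fr k) as [F1 [F2 F3]]. pose proof (S4 (S k) ltac:(lia)).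
    pose proof (S1 k Hk). nra.
  - apply S4; auto.
  - apply HN; auto.
  - apply Fr.
Qed.


Definition M4 := (Z * Z * Z * Z)%type.
Inductive res := Emit (k : Z) (A : M4) | Absorb (A1 A2 : M4).
Definition normalize (A : M4) : M4 := let '(a, b, c, d) := A in
  if (15 * c + 11 * d <? 0)%Z then ((-a)%Z, (-b)%Z, (-c)%Z, (-d)%Z) else (a, b, c, d).
Definition kk (a b c d : Z) : Z := ((15 * a + 11 * b) / (15 * c + 11 * d))%Z.
Definition emit_cond (a b c d : Z) : bool :=
  let d1 := (15 * c + 11 * d)%Z in let d2 := (11 * c + 4 * d)%Z in
  let n1 := (15 * a + 11 * b)%Z in let n2 := (11 * a + 4 * b)%Z in
  let k := kk a b c d in
  ((0 <? d1) && (0 <? d2) && (k * d1 <=? n1) && (n1 <=? (k + 1) * d1)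
   && (k * d2 <=? n2) && (n2 <=? (k + 1) * d2))%Z.
Definition stepZ (A0 : M4) : res :=
  let '(a, b, c, d) := normalize A0 in
  if emit_cond a b c d then
    let k := kk a b c d in Emit k (c, d, (a - k * c)%Z, (b - k * d)%Z)
  else Absorb ((a + b)%Z, a, (c + d)%Z, c) ((2 * a + b)%Z, a, (2 * c + d)%Z, c).
Fixpoint good (fuel : nat) (A : M4) : bool :=
  match fuel with
  | O => false
  | S f =>
    match stepZ A with
    | Emit k A' => if ((k =? 1) || (k =? 2))%Z then good f A' else true
    | Absorb A1 A2 => good f A1 && good f A2
    end
  end.

Definition relA (A : M4) (x y : R) : Prop :=
  let '(a, b, c, d) := A in y * (IZR c * x + IZR d) = IZR a * x + IZR b.

Lemma normalize_rel : forall A x y, relA A x y -> relA (normalize A) x y.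
Proof.
  intros [[[a b] c] d] x y H. unfold normalize.
  destruct (15 * c + 11 * d <? 0)%Z; auto. unfold relA in *.
  rewrite !opp_IZR. lra.
Qed.

Lemma lin_nonneg : forall (al be : Z) x, 15/11 < x < 11/4 ->
  (0 <= 15 * al + 11 * be)%Z -> (0 <= 11 * al + 4 * be)%Z -> 0 <= IZR al * x + IZR be.
Proof.
  intros al be x Hx H1 H2. apply IZR_le in H1. apply IZR_le in H2.
  rewrite plus_IZR, !mult_IZR in H1, H2. simpl in H1, H2.
  assert (Id : 61 * (IZR al * x + IZR be) =
    (15 * IZR al + 11 * IZR be) * (11 - 4 * x) + (11 * IZR al + 4 * IZR be) * (11 * x - 15)) by ring.
  assert (0 <= (15 * IZR al + 11 * IZR be) * (11 - 4 * x)) by (apply Rmult_le_pos; lra).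
  assert (0 <= (11 * IZR al + 4 * IZR be) * (11 * x - 15)) by (apply Rmult_le_pos; lra).
  lra.
Qed.

Lemma lin_pos : forall (al be : Z) x, 15/11 < x < 11/4 ->
  (0 < 15 * al + 11 * be)%Z -> (0 <= 11 * al + 4 * be)%Z -> 0 < IZR al * x + IZR be.
Proof.
  intros al be x Hx H1 H2. apply IZR_lt in H1. apply IZR_le in H2.
  rewrite plus_IZR, !mult_IZR in H1, H2. simpl in H1, H2.
  assert (Id : 61 * (IZR al * x + IZR be) =
    (15 * IZR al + 11 * IZR be) * (11 - 4 * x) + (11 * IZR al + 4 * IZR be) * (11 * x - 15)) by ring.
  assert (0 < (15 * IZR al + 11 * IZR be) * (11 - 4 * x)) by (apply Rmult_lt_0_compat; lra).
  assert (0 <= (11 * IZR al + 4 * IZR be) * (11 * x - 15)) by (apply Rmult_le_pos; lra).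
  lra.
Qed.

Lemma emit_bounds : forall a b c d x y, emit_cond a b c d = true ->
  15/11 < x < 11/4 -> y * (IZR c * x + IZR d) = IZR a * x + IZR b ->
  IZR (kk a b c d) <= y <= IZR (kk a b c d) + 1.
Proof.
  intros a b c d x y H Hx Hr. unfold emit_cond in H.
  set (k := kk a b c d) in *.
  repeat rewrite andb_true_iff in H.
  destruct H as [[[[[H1 H2] H3] H4] H5] H6].
  apply Z.ltb_lt in H1, H2. apply Z.leb_le in H3, H4, H5, H6.
  assert (G : 0 < IZR c * x + IZR d) by (apply lin_pos; auto; lia).
  assert (F1 : 0 <= IZR (a - k * c) * x + IZR (b - k * d)) by (apply lin_nonneg; auto; lia).
  assert (F2 : 0 <= IZR ((k + 1) * c - a) * x + IZR ((k + 1) * d - b)) by (apply lin_nonneg; auto; lia).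
  rewrite !minus_IZR, !mult_IZR in F1. rewrite !minus_IZR, !mult_IZR, plus_IZR in F2.
  simpl in F2.
  split.
  - assert (0 <= (y - IZR k) * (IZR c * x + IZR d)) by nra. nra.
  - assert (0 <= (IZR k + 1 - y) * (IZR c * x + IZR d)) by nra. nra.
Qed.

Lemma good_sound : forall (X Y : nat -> R) (ax bx : nat -> Z) n0 m0,
  (forall k, (n0 <= k)%nat -> 15/11 < X k < 11/4 /\ (ax k = 1 \/ ax k = 2)%Z /\
      X (S k) * (X k - IZR (ax k)) = 1) ->
  (forall k, (m0 <= k)%nat -> rfloor (Y k) = bx k /\ (bx k = 1 \/ bx k = 2)%Z /\
      Y (S k) * (Y k - IZR (bx k)) = 1) ->
  forall fuel A n m, (n0 <= n)%nat -> (m0 <= m)%nat -> good fuel A = true ->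
  relA A (X n) (Y m) -> False.
Proof.
  intros X Y ax bx n0 m0 HX HY fuel. induction fuel; intros A n m Hn Hm Hg Hr.
  - discriminate.
  - simpl in Hg. unfold stepZ in Hg.
    apply normalize_rel in Hr.
    destruct (normalize A) as [[[a b] c] d]. simpl in Hr.
    destruct (HX n Hn) as [Hx [Hax Hxs]].
    destruct (HY m Hm) as [Hfl [Hbx Hys]].
    destruct (emit_cond a b c d) eqn:EC.
    + pose proof (emit_bounds a b c d (X n) (Y m) EC Hx Hr) as [B1 B2].
      set (k := kk a b c d) in *.
      assert (Hk : bx m = k).
      { rewrite <- Hfl. apply rfloor_spec. split; auto.
        destruct B2 as [B2|B2]; auto. exfalso.
        assert (rfloor (Y m) = (k + 1)%Z) as E.
        { apply rfloor_spec. rewrite B2, plus_IZR. simpl. lra. }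
        rewrite Hfl in E. rewrite E, B2, plus_IZR in Hys. simpl in Hys.
        replace (IZR k + 1 - (IZR k + 1)) with 0 in Hys by ring. lra. }
      destruct ((k =? 1) || (k =? 2))%Z eqn:Ek.
      * apply (IHfuel _ n (S m) Hn ltac:(lia) Hg).
        unfold relA. rewrite Hk in Hys. rewrite !minus_IZR, !mult_IZR.
        assert (Id : Y (S m) * ((IZR a - IZR k * IZR c) * X n + (IZR b - IZR k * IZR d))
           - (IZR c * X n + IZR d) =
           Y (S m) * (IZR a * X n + IZR b - Y m * (IZR c * X n + IZR d))
           + (IZR c * X n + IZR d) * (Y (S m) * (Y m - IZR k) - 1)) by ring.
        rewrite Hr, Hys in Id. lra.
      * rewrite Hk in Hbx. destruct Hbx as [E|E]; rewrite E in Ek; discriminate.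
    + apply andb_true_iff in Hg. destruct Hg as [G1 G2].
      assert (Gen : forall t : Z, (t = 1 \/ t = 2)%Z -> ax n = t ->
        relA ((t * a + b)%Z, a, (t * c + d)%Z, c) (X (S n)) (Y m)).
      { intros t _ Et. unfold relA. rewrite Et in Hxs. rewrite !plus_IZR, !mult_IZR.
        assert (Id : Y m * ((IZR t * IZR c + IZR d) * X (S n) + IZR c) -
            ((IZR t * IZR a + IZR b) * X (S n) + IZR a) =
            X (S n) * (Y m * (IZR c * X n + IZR d) - (IZR a * X n + IZR b))
            - (Y m * IZR c - IZR a) * (X (S n) * (X n - IZR t) - 1)) by ring.
        rewrite Hr, Hxs in Id. lra. }
      destruct Hax as [E|E].
      * apply (IHfuel _ (S n) m ltac:(lia) Hm G1).
        pose proof (Gen 1%Z (or_introl eq_refl) E) as R1.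
        replace (1 * a + b)%Z with (a + b)%Z in R1 by ring.
        replace (1 * c + d)%Z with (c + d)%Z in R1 by ring. exact R1.
      * apply (IHfuel _ (S n) m ltac:(lia) Hm G2).
        exact (Gen 2%Z (or_intror eq_refl) E).
Qed.


Definition chk_abc (a b c : Z) : bool :=
  let one s :=
    if (a =? 0)%Z then
      (if (- (b * c) =? s)%Z then zall (-34) 69 (fun d => good 40 (a, b, c, d)) else true)
    else
      let num := (s + b * c)%Z in
      if (num mod a =? 0)%Z then
        (let d := (num / a)%Z in if (Z.abs d <=? 34)%Z then good 40 (a, b, c, d) else true)
      else true in
  one 67%Z && one (-67)%Z.

Lemma box_true : zall (-17) 35 (fun a => zall (-17) 35 (fun b => zall (-34) 69 (fun c => chk_abc a b c))) = true.
Proof. vm_compute. reflexivity. Qed.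

Lemma box_good : forall a b c d, (Z.abs a <= 17)%Z -> (Z.abs b <= 17)%Z ->
  (Z.abs c <= 34)%Z -> (Z.abs d <= 34)%Z ->
  (a * d - b * c = 67 \/ a * d - b * c = -67)%Z -> good 40 (a, b, c, d) = true.
Proof.
  intros a b c d Ha Hb Hc Hd Hdet.
  assert (E35 : Z.of_nat 35 = 35%Z) by reflexivity.
  assert (E69 : Z.of_nat 69 = 69%Z) by reflexivity.
  pose proof (zall_spec _ _ _ box_true a ltac:(rewrite E35; lia)) as H1.
  pose proof (zall_spec _ _ _ H1 b ltac:(rewrite E35; lia)) as H2.
  pose proof (zall_spec _ _ _ H2 c ltac:(rewrite E69; lia)) as H3.
  unfold chk_abc in H3. apply andb_true_iff in H3. destruct H3 as [H67 Hm67].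
  assert (Gen : forall s, (a * d - b * c = s)%Z ->
    (if (a =? 0)%Z then
      (if (- (b * c) =? s)%Z then zall (-34) 69 (fun d => good 40 (a, b, c, d)) else true)
    else
      let num := (s + b * c)%Z in
      if (num mod a =? 0)%Z then
        (let d := (num / a)%Z in if (Z.abs d <=? 34)%Z then good 40 (a, b, c, d) else true)
      else true) = true -> good 40 (a, b, c, d) = true).
  { intros s Hs H. destruct (Z.eqb_spec a 0) as [Ha0|Ha0].
    - subst a. cbv beta iota zeta in H. replace (- (b * c) =? s)%Z with true in H by (symmetry; apply Z.eqb_eq; lia).
      cbv beta iota zeta in H.
      exact (zall_spec _ _ _ H d ltac:(rewrite E69; lia)).
    - cbv beta iota zeta in H.
      assert (En : (s + b * c = d * a)%Z) by lia.
      rewrite En, Z.mod_mul, Z.div_mul in H by auto. rewrite Z.eqb_refl in H.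
      replace (Z.abs d <=? 34)%Z with true in H by (symmetry; apply Z.leb_le; lia).
      cbv beta iota zeta in H. exact H. }
  destruct Hdet as [E|E]; [exact (Gen 67%Z E H67) | exact (Gen (-67)%Z E Hm67)].
Qed.


Definition cert_ok (p : Z) (c : Z * Z * Z * nat * nat * nat * nat) : bool :=
  let '(D, P, Q, N1, L1, N2, L2) := c in
  (0 <? p)%Z && surd_ok D P Q N1 L1 && surd_ok (p * p * D)%Z (p * P)%Z Q N2 L2.

Lemma cert_sound : forall p c, cert_ok p c = true ->
  exists xi, irrational xi /\ eventually_1_2 xi /\ eventually_1_2 (IZR p * xi).
Proof.
  intros p [[[[[[D P] Q] N1] L1] N2] L2] H. unfold cert_ok in H.
  apply andb_true_iff in H as [H H2]. apply andb_true_iff in H as [H0 H1].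
  apply Z.ltb_lt in H0.
  exists (qval D (P, Q)).
  assert (E1 := surd_ok_sound _ _ _ _ _ H1).
  assert (HD : (0 < D)%Z).
  { unfold surd_ok in H1. repeat rewrite andb_true_iff in H1. destruct H1 as [[[[[X _] _] _] _] _].
    apply Z.ltb_lt; auto. }
  split; [apply ev12_irrational; auto|]. split; auto.
  rewrite qval_scale; [|lia|lia]. eapply surd_ok_sound; eauto.
Qed.

Fixpoint hasdiv_aux (p d : Z) (fuel : nat) : bool :=
  match fuel with
  | O => false
  | S f => if (p <=? d)%Z then false else ((p mod d =? 0)%Z || hasdiv_aux p (d + 1)%Z f)
  end.
Definition hasdiv (p : Z) : bool := hasdiv_aux p 2 2000.

Lemma hasdiv_aux_spec : forall fuel p d, hasdiv_aux p d fuel = true ->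
  exists e, (d <= e < p)%Z /\ (p mod e = 0)%Z.
Proof.
  induction fuel; intros p d H; simpl in H; [discriminate|].
  destruct (Z.leb_spec p d); [discriminate|].
  apply orb_true_iff in H. destruct H as [H|H].
  - exists d. split; [lia|]. apply Z.eqb_eq; auto.
  - destruct (IHfuel _ _ H) as [e [He1 He2]]. exists e. split; auto. lia.
Qed.

Lemma hasdiv_not_prime : forall p, hasdiv p = true -> ~ prime p.
Proof.
  intros p H Hp. apply hasdiv_aux_spec in H.
  destruct H as [d [Hd Hm]].
  destruct Hp as [Hp1 Hp2].
  assert (Hr := Hp2 d ltac:(lia)).
  destruct Hr as [_ _ Hg].
  assert (Hdd : (d | 1)%Z).
  { apply Hg. apply Z.divide_refl. apply Z.mod_divide; auto. lia. }
  apply Z.divide_1_r in Hdd. lia.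
Qed.

Definition certs : list (Z * (Z * Z * Z * nat * nat * nat * nat)) := [
  (2, (12, 2, 4, 0%nat, 2%nat, 0%nat, 2%nat));
  (3, (12, 6, 6, 2%nat, 2%nat, 1%nat, 2%nat));
  (5, (5, 15, 10, 3%nat, 1%nat, 1%nat, 1%nat));
  (7, (8, 36, 28, 4%nat, 1%nat, 2%nat, 1%nat));
  (11, (5, 29, 22, 3%nat, 1%nat, 1%nat, 1%nat));
  (13, (12, 70, 52, 3%nat, 2%nat, 1%nat, 2%nat));
  (17, (221, 221, 170, 4%nat, 4%nat, 1%nat, 4%nat));
  (19, (85, -6457, -4066, 6%nat, 3%nat, 2%nat, 3%nat));
  (23, (96, 186, 138, 3%nat, 4%nat, 1%nat, 4%nat));
  (29, (260, -708, -406, 4%nat, 5%nat, 2%nat, 5%nat));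
  (31, (40, -4430, -2790, 6%nat, 3%nat, 2%nat, 3%nat));
  (37, (12, -1154, -814, 5%nat, 2%nat, 2%nat, 2%nat));
  (41, (40, -3148, -2214, 6%nat, 3%nat, 2%nat, 3%nat));
  (43, (3604, -31422, -19780, 6%nat, 7%nat, 2%nat, 7%nat));
  (47, (672, -8344, -5264, 7%nat, 6%nat, 2%nat, 6%nat));
  (53, (221, 851, 530, 5%nat, 4%nat, 1%nat, 4%nat));
  (59, (85, -1345, -826, 7%nat, 3%nat, 2%nat, 3%nat));
  (61, (260, 850, 610, 4%nat, 5%nat, 1%nat, 5%nat));
  (71, (40, 728, 426, 6%nat, 3%nat, 1%nat, 3%nat));
  (73, (8, 228, 146, 6%nat, 1%nat, 1%nat, 1%nat));
  (79, (40, 746, 474, 5%nat, 3%nat, 1%nat, 3%nat));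
  (83, (1517, 25189, 14774, 6%nat, 6%nat, 3%nat, 6%nat));
  (89, (40, -48832, -30794, 8%nat, 3%nat, 2%nat, 3%nat));
  (97, (12, -7974, -5044, 9%nat, 2%nat, 3%nat, 2%nat));
  (101, (1365, -22795, -14342, 7%nat, 6%nat, 2%nat, 6%nat));
  (103, (19604, 16202, 10300, 5%nat, 7%nat, 1%nat, 7%nat));
  (107, (790325, -1737505, -1019710, 7%nat, 11%nat, 2%nat, 11%nat));
  (109, (55700, -911566, -644408, 6%nat, 9%nat, 2%nat, 9%nat));
  (113, (8104, 67696, 39324, 8%nat, 7%nat, 3%nat, 7%nat));
  (127, (533, -2535, -1778, 4%nat, 5%nat, 2%nat, 5%nat));
  (131, (533, -2617, -1834, 4%nat, 5%nat, 2%nat, 5%nat));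
  (137, (8, 884, 548, 8%nat, 1%nat, 2%nat, 1%nat));
  (139, (1517, -11429, -8062, 5%nat, 6%nat, 2%nat, 6%nat));
  (149, (47085, -2285063, -1447982, 8%nat, 8%nat, 2%nat, 8%nat));
  (151, (40, 832, 604, 5%nat, 3%nat, 1%nat, 3%nat));
  (157, (308021, 77389, 56206, 5%nat, 10%nat, 1%nat, 10%nat));
  (163, (43677, 625971, 443034, 7%nat, 8%nat, 4%nat, 8%nat));
  (167, (64512, -988408, -698728, 6%nat, 10%nat, 2%nat, 10%nat));
  (173, (1517, 47009, 27334, 7%nat, 6%nat, 3%nat, 6%nat));
  (179, (260, -296970, -174346, 9%nat, 5%nat, 4%nat, 5%nat));
  (181, (12, 22872, 14118, 9%nat, 2%nat, 4%nat, 2%nat));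
  (191, (5, 20423, 11842, 9%nat, 1%nat, 3%nat, 1%nat));
  (193, (96, -2140, -1544, 6%nat, 4%nat, 2%nat, 4%nat));
  (197, (3973, 610237, 357358, 8%nat, 7%nat, 3%nat, 7%nat));
  (199, (44096, 943208, 552424, 7%nat, 8%nat, 3%nat, 8%nat));
  (211, (260, 3580, 2110, 6%nat, 5%nat, 1%nat, 5%nat));
  (223, (12104, -1095708, -642686, 8%nat, 9%nat, 2%nat, 9%nat));
  (227, (2813, 12197, 8626, 6%nat, 5%nat, 1%nat, 5%nat));
  (229, (3725, 31655, 22442, 6%nat, 7%nat, 2%nat, 7%nat));
  (233, (19604, -63502, -45668, 7%nat, 7%nat, 2%nat, 7%nat));
  (239, (85, 1904573, 1346526, 10%nat, 3%nat, 3%nat, 3%nat));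
  (241, (12, 2040, 1446, 6%nat, 2%nat, 2%nat, 2%nat));
  (251, (335237, -313824581, -197897938, 11%nat, 10%nat, 3%nat, 10%nat));
  (257, (1768, -18716, -10794, 6%nat, 7%nat, 3%nat, 7%nat));
  (263, (329472, -4402080, -3102348, 8%nat, 10%nat, 2%nat, 10%nat));
  (269, (12306068, 1314242, 931816, 5%nat, 13%nat, 1%nat, 13%nat));
  (271, (1768904, -187434470, -135799726, 10%nat, 11%nat, 2%nat, 11%nat));
  (277, (19604, -36146, -25484, 5%nat, 7%nat, 2%nat, 7%nat));
  (281, (40, 2378, 1686, 5%nat, 3%nat, 1%nat, 3%nat));
  (283, (533, -240953, -170366, 7%nat, 5%nat, 3%nat, 5%nat));
  (293, (479653797, 10158575, 7197838, 5%nat, 16%nat, 1%nat, 16%nat));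
  (307, (51988, -73130, -42366, 6%nat, 9%nat, 2%nat, 9%nat));
  (311, (6720, 25576, 16172, 6%nat, 6%nat, 1%nat, 6%nat));
  (313, (1976832, -2836248, -1787856, 7%nat, 12%nat, 2%nat, 12%nat));
  (317, (25604, 67994, 48184, 5%nat, 9%nat, 1%nat, 9%nat));
  (331, (3725, -12519695, -7728850, 11%nat, 7%nat, 4%nat, 7%nat));
  (337, (96, 4756, 3370, 5%nat, 4%nat, 1%nat, 4%nat));
  (347, (33223692, -1769170, -1247812, 5%nat, 14%nat, 2%nat, 14%nat));
  (349, (5, 985, 698, 5%nat, 1%nat, 1%nat, 1%nat));
  (353, (8, -55440, -32476, 9%nat, 1%nat, 5%nat, 1%nat));
  (359, (96, -3054, -2154, 5%nat, 4%nat, 2%nat, 4%nat));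
  (367, (1517, 15421, 9542, 7%nat, 6%nat, 1%nat, 6%nat));
  (373, (1517, 17899, 12682, 5%nat, 6%nat, 1%nat, 6%nat));
  (379, (100040000, 6104200, 3790000, 7%nat, 16%nat, 1%nat, 16%nat));
  (383, (509404904, -3365622768, -2382099140, 9%nat, 17%nat, 4%nat, 17%nat));
  (389, (260, -82718, -52126, 8%nat, 5%nat, 2%nat, 5%nat));
  (397, (67077, -125307, -88134, 6%nat, 10%nat, 2%nat, 10%nat));
  (401, (3725, -42433, -24862, 7%nat, 7%nat, 2%nat, 7%nat));
  (409, (480, 13860, 9816, 5%nat, 4%nat, 1%nat, 4%nat));
  (419, (260, 5910, 4190, 5%nat, 5%nat, 1%nat, 5%nat));
  (421, (12, 2378, 1684, 5%nat, 2%nat, 1%nat, 2%nat));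
  (431, (580, 14606, 10344, 5%nat, 5%nat, 1%nat, 5%nat));
  (433, (1768, -1123208, -794122, 8%nat, 7%nat, 4%nat, 7%nat));
  (439, (804613, 516533, 366126, 6%nat, 11%nat, 1%nat, 11%nat));
  (443, (109603372100, -137925235590, -96950634170, 11%nat, 21%nat, 4%nat, 21%nat));
  (449, (78807236494340, -5640075318, -3549206708, 7%nat, 27%nat, 2%nat, 27%nat));
  (457, (3908533, -48522335, -34305162, 9%nat, 11%nat, 4%nat, 11%nat));
  (461, (297021, 242889, 150286, 7%nat, 10%nat, 1%nat, 10%nat));
  (463, (77986557, 3803787, 2697438, 6%nat, 14%nat, 1%nat, 14%nat));
  (467, (221, -14629, -10274, 7%nat, 4%nat, 2%nat, 4%nat));
  (479, (26563712, 3448170, 2441942, 5%nat, 14%nat, 1%nat, 14%nat));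
  (487, (43677, 138909, 98374, 5%nat, 8%nat, 1%nat, 8%nat));
  (491, (533, 15253, 10802, 5%nat, 5%nat, 1%nat, 5%nat));
  (499, (466257645, 244646771, 173102102, 8%nat, 16%nat, 3%nat, 16%nat));
  (503, (23100, 70990, 50300, 5%nat, 8%nat, 1%nat, 8%nat));
  (509, (257045, 257045, 182222, 6%nat, 8%nat, 1%nat, 8%nat));
  (521, (19604, 73498, 52100, 6%nat, 7%nat, 1%nat, 7%nat));
  (523, (67077, 163959, 116106, 5%nat, 10%nat, 1%nat, 10%nat));
  (541, (394388, 16870596, 9801838, 9%nat, 11%nat, 3%nat, 11%nat));
  (547, (44096, -2737000, -1605992, 9%nat, 8%nat, 2%nat, 8%nat));
  (557, (8468, -478368, -292982, 9%nat, 7%nat, 2%nat, 7%nat));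
  (563, (23100, -104060, -73190, 7%nat, 8%nat, 2%nat, 8%nat));
  (569, (8840, -11766254, -7420898, 11%nat, 7%nat, 4%nat, 7%nat));
  (571, (2813, 35379, 21698, 8%nat, 5%nat, 1%nat, 5%nat));
  (577, (335237, 810252827, 510934654, 11%nat, 10%nat, 3%nat, 10%nat));
  (587, (3604, -49422, -30524, 8%nat, 7%nat, 2%nat, 7%nat));
  (593, (12659368, -35596602, -20680282, 8%nat, 13%nat, 5%nat, 13%nat));
  (599, (1517, 35647043, 22590686, 11%nat, 6%nat, 3%nat, 6%nat));
  (601, (260, 750516, 549314, 9%nat, 5%nat, 4%nat, 5%nat));
  (607, (93632, 451306, 319282, 6%nat, 8%nat, 2%nat, 8%nat));
  (613, (24653, 15314115, 9657202, 9%nat, 9%nat, 3%nat, 9%nat));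
  (617, (2117021, -33227031, -23365790, 9%nat, 12%nat, 4%nat, 12%nat));
  (619, (47085, 138093, 97802, 5%nat, 8%nat, 1%nat, 8%nat));
  (631, (3725, -4820143, -2800378, 10%nat, 7%nat, 2%nat, 7%nat));
  (641, (10400, 61548, 43588, 5%nat, 8%nat, 1%nat, 8%nat));
  (643, (9797, -2886985, -1829978, 11%nat, 8%nat, 4%nat, 8%nat));
  (647, (533, 20887301, 14688194, 10%nat, 5%nat, 3%nat, 5%nat));
  (653, (790325, -1595084025, -977077370, 12%nat, 11%nat, 2%nat, 11%nat));
  (659, (4293180, 1839120, 1126890, 7%nat, 12%nat, 1%nat, 12%nat));
  (661, (18348327940, -9848268870, -7098205346, 10%nat, 19%nat, 2%nat, 19%nat));
  (673, (9755512896, 9738829476, 6141387470, 9%nat, 20%nat, 3%nat, 20%nat));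
  (677, (38651093, 3691983, 2614574, 5%nat, 15%nat, 1%nat, 15%nat));
  (683, (27636053, 363677895, 229333642, 9%nat, 13%nat, 3%nat, 13%nat));
  (691, (3006657885, 34386345, 24349458, 5%nat, 18%nat, 1%nat, 18%nat));
  (701, (55700, 156400, 110758, 5%nat, 9%nat, 1%nat, 9%nat));
  (709, (421480896, 750879484, 543011756, 10%nat, 16%nat, 3%nat, 16%nat));
  (719, (776165, -15650959, -9868994, 8%nat, 11%nat, 2%nat, 11%nat));
  (727, (133952, -10240160, -7421216, 10%nat, 10%nat, 2%nat, 10%nat));
  (733, (2295221, -251716671, -184063630, 11%nat, 12%nat, 4%nat, 12%nat));
  (739, (2080910685, -266412069, -165235966, 9%nat, 16%nat, 2%nat, 16%nat));
  (743, (43677, 132183, 93618, 5%nat, 8%nat, 1%nat, 8%nat));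
  (751, (357608, 11009604, 6363974, 9%nat, 11%nat, 3%nat, 11%nat));
  (757, (81503969117, 183929587, 130238822, 5%nat, 20%nat, 1%nat, 20%nat));
  (761, (793885, -3451239, -2439766, 6%nat, 11%nat, 2%nat, 11%nat));
  (769, (8, 4348, 3076, 6%nat, 1%nat, 2%nat, 1%nat));
  (773, (8561472, -6294864, -3902104, 9%nat, 12%nat, 2%nat, 12%nat));
  (787, (3150621, 102149259, 74565102, 10%nat, 14%nat, 3%nat, 14%nat));
  (797, (43677, -17270125, -12211634, 9%nat, 8%nat, 3%nat, 8%nat));
  (809, (260, 53051410, 33581590, 13%nat, 5%nat, 3%nat, 5%nat));
  (811, (1517, 50213, 30818, 7%nat, 6%nat, 1%nat, 6%nat));
  (821, (636719414805, -94853813979, -67071268242, 8%nat, 22%nat, 2%nat, 22%nat));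
  (823, (119029, -167259637, -105474034, 10%nat, 9%nat, 4%nat, 9%nat));
  (827, (14371677, -7585166595, -4379654718, 12%nat, 14%nat, 4%nat, 14%nat));
  (829, (85, 16407, 11606, 6%nat, 3%nat, 2%nat, 3%nat));
  (839, (33194653632, 152554696, 96599104, 7%nat, 18%nat, 1%nat, 18%nat));
  (853, (43677, 172089, 121126, 6%nat, 8%nat, 1%nat, 8%nat));
  (857, (421070404, 19899848, 12623610, 7%nat, 15%nat, 1%nat, 15%nat));
  (859, (274580, 510190, 369370, 7%nat, 9%nat, 1%nat, 9%nat));
  (863, (70408877, -41443623, -26116106, 8%nat, 14%nat, 2%nat, 14%nat));
  (877, (3132, 3454608, 2004822, 12%nat, 6%nat, 3%nat, 6%nat));
  (881, (697276832, 2063471088, 1197233188, 11%nat, 18%nat, 3%nat, 18%nat));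
  (883, (19604, 279102, 173068, 8%nat, 7%nat, 2%nat, 7%nat));
  (887, (672, -4318524, -2533272, 10%nat, 6%nat, 2%nat, 6%nat));
  (907, (44096, -468777336, -295464320, 14%nat, 8%nat, 2%nat, 8%nat));
  (911, (21900, -44863100, -32841550, 10%nat, 8%nat, 5%nat, 8%nat));
  (919, (10400, 126740, 91900, 7%nat, 8%nat, 1%nat, 8%nat));
  (929, (40, 24617090, 15523590, 12%nat, 3%nat, 4%nat, 3%nat));
  (937, (8, -458968, -266108, 13%nat, 1%nat, 2%nat, 1%nat));
  (941, (14600037, -52503047, -33106262, 8%nat, 14%nat, 2%nat, 14%nat));
  (947, (842334533, 22870113281, 16171633006, 9%nat, 15%nat, 5%nat, 15%nat));
  (953, (30074252, -116763708, -73626874, 9%nat, 14%nat, 3%nat, 14%nat));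
  (967, (14976896, -1749751688, -1106572912, 12%nat, 14%nat, 2%nat, 14%nat));
  (971, (1481085, 341851921, 241687726, 10%nat, 10%nat, 5%nat, 10%nat));
  (977, (35010893, 880907635, 511047206, 12%nat, 15%nat, 3%nat, 15%nat));
  (983, (102562624512, 44274948488, 31304216936, 9%nat, 20%nat, 3%nat, 20%nat));
  (991, (260, 13075746, 7656466, 11%nat, 5%nat, 5%nat, 5%nat));
  (997, (22716424130621, -12082230069, -7003296890, 8%nat, 24%nat, 2%nat, 24%nat));
  (1009, (28472900, -12142124850, -7012449100, 13%nat, 13%nat, 4%nat, 13%nat));
  (1013, (3888788, 143510898, 84042532, 10%nat, 11%nat, 4%nat, 11%nat));
  (1019, (210249996, 19321389474, 11924323734, 14%nat, 16%nat, 3%nat, 16%nat));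
  (1021, (12, 38862, 22462, 8%nat, 2%nat, 4%nat, 2%nat));
  (1031, (96, -328484, -189704, 10%nat, 4%nat, 2%nat, 4%nat));
  (1033, (3199600356300096, 27103798791048, 16752430356816, 14%nat, 26%nat, 5%nat, 26%nat));
  (1039, (8840, 15649532, 11275228, 12%nat, 7%nat, 3%nat, 7%nat));
  (1049, (260, 3141116, 1986806, 11%nat, 5%nat, 3%nat, 5%nat));
  (1051, (274580, 781416, 552826, 6%nat, 9%nat, 1%nat, 9%nat));
  (1061, (1517, -264575, -167638, 9%nat, 6%nat, 2%nat, 6%nat));
  (1063, (63723499289996, -71318700014, -50425371550, 7%nat, 26%nat, 2%nat, 26%nat));
  (1069, (12, 15385682, 9702244, 12%nat, 2%nat, 5%nat, 2%nat));
  (1087, (590004104, 32875692, 19120330, 8%nat, 17%nat, 1%nat, 17%nat));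
  (1091, (95445777245, -223679478477, -161157516674, 12%nat, 20%nat, 4%nat, 20%nat));
  (1093, (221533452, 1815879194, 1125512378, 11%nat, 16%nat, 4%nat, 16%nat));
  (1097, (65788317, 4364335131, 3086056266, 9%nat, 14%nat, 5%nat, 14%nat));
  (1103, (343805768, -19189703530, -13904151074, 11%nat, 15%nat, 6%nat, 15%nat));
  (1109, (51525, 348009, 246198, 6%nat, 8%nat, 1%nat, 8%nat));
  (1117, (1517, 1323625, 775198, 9%nat, 6%nat, 3%nat, 6%nat));
  (1123, (51655843840004, -23192007338, -13390445368, 9%nat, 25%nat, 2%nat, 25%nat));
  (1129, (321485, 91187635, 53403958, 10%nat, 10%nat, 5%nat, 10%nat));
  (1151, (335237, 940676549, 543269698, 13%nat, 10%nat, 3%nat, 10%nat));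
  (1153, (14760063077, 164431103, 95037178, 8%nat, 18%nat, 1%nat, 18%nat));
  (1163, (333164919379360004, -42014583386342, -24380783193040, 10%nat, 35%nat, 2%nat, 35%nat));
  (1171, (47085, 202066171, 143023598, 11%nat, 8%nat, 5%nat, 8%nat));
  (1181, (1517, -96921, -68498, 7%nat, 6%nat, 2%nat, 6%nat));
  (1187, (533, -393295, -230278, 9%nat, 5%nat, 2%nat, 5%nat));
  (1193, (260104, 963478, 565482, 7%nat, 9%nat, 1%nat, 9%nat));
  (1201, (193321220, 9631398302, 5898552968, 14%nat, 15%nat, 3%nat, 15%nat));
  (1213, (67077, -2125329, -1244538, 8%nat, 10%nat, 2%nat, 10%nat));
  (1217, (191313337345477598315888352, -1161230263194997644, -821104715793590802, 8%nat, 48%nat, 2%nat, 48%nat));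
  (1223, (7075596, -428862030, -263008596, 11%nat, 14%nat, 4%nat, 14%nat));
  (1229, (308021, -22846165, -16151518, 9%nat, 10%nat, 4%nat, 10%nat));
  (1231, (329472, -981804, -605652, 9%nat, 10%nat, 2%nat, 10%nat));
  (1237, (7075596, -24762688, -14500114, 9%nat, 14%nat, 2%nat, 14%nat));
  (1249, (221, 16756089, 10354210, 13%nat, 4%nat, 3%nat, 4%nat));
  (1259, (52300030868, 6214742930, 3919584268, 10%nat, 21%nat, 3%nat, 21%nat));
  (1277, (17962789617710228, 240516438066, 175971381524, 7%nat, 31%nat, 1%nat, 31%nat));
  (1279, (19040, 5837238, 3680962, 9%nat, 8%nat, 4%nat, 8%nat));
  (1283, (3973, 4009861, 2353022, 10%nat, 7%nat, 3%nat, 7%nat));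
  (1289, (47085, 807989, 466618, 8%nat, 8%nat, 2%nat, 8%nat));
  (1291, (1494633392700, -3805064690, -2397516100, 8%nat, 22%nat, 2%nat, 22%nat));
  (1297, (29138400, -262144230, -184757650, 10%nat, 14%nat, 3%nat, 14%nat));
  (1301, (1300, -366571010, -232293550, 14%nat, 5%nat, 4%nat, 5%nat));
  (1303, (15159765621, 3925300020261, 2298705366250, 14%nat, 18%nat, 3%nat, 18%nat));
  (1307, (4682892, -9317708502, -5458186226, 11%nat, 12%nat, 4%nat, 12%nat));
  (1319, (4708896, -1191700724, -736875178, 13%nat, 12%nat, 4%nat, 12%nat));
  (1321, (1517, 130793, 76618, 8%nat, 6%nat, 2%nat, 6%nat));
  (1327, (569478511048, 58595654378, 36163141254, 12%nat, 21%nat, 3%nat, 21%nat));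
  (1361, (85, 487765, 307586, 10%nat, 3%nat, 3%nat, 3%nat));
  (1367, (17443013188, 3737830378, 2631997194, 10%nat, 19%nat, 3%nat, 19%nat));
  (1373, (109603372100, 133193440640, 96398453570, 11%nat, 21%nat, 3%nat, 21%nat));
  (1381, (55700, 497615954, 351867752, 10%nat, 9%nat, 3%nat, 9%nat));
  (1399, (47085, -1903491, -1200342, 9%nat, 8%nat, 2%nat, 8%nat));
  (1409, (49280, 886791052, 549921428, 15%nat, 8%nat, 3%nat, 8%nat));
  (1423, (56648, 14877700, 8626226, 12%nat, 9%nat, 3%nat, 9%nat));
  (1427, (329472, 855712, 502304, 7%nat, 10%nat, 1%nat, 10%nat));
  (1429, (43677, -30342817, -21860842, 10%nat, 8%nat, 4%nat, 8%nat));
  (1433, (16687989128, 327949528, 206887942, 7%nat, 19%nat, 1%nat, 19%nat));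
  (1439, (343805768, 55503423268, 33998639986, 13%nat, 15%nat, 3%nat, 15%nat));
  (1447, (36092483320808, -53750741196, -33896817154, 8%nat, 27%nat, 2%nat, 27%nat));
  (1451, (107580, -308051462, -218030162, 11%nat, 8%nat, 4%nat, 8%nat));
  (1453, (614652, 2212614, 1296076, 7%nat, 10%nat, 1%nat, 10%nat));
  (1459, (10151618387457596, -21599410787254, -13334527272692, 13%nat, 28%nat, 4%nat, 28%nat));
  (1471, (43772592397999717928, 232407994823576, 143449410153322, 12%nat, 35%nat, 3%nat, 35%nat));
  (1481, (228669706303077792, -5112450736188, -3223973325804, 9%nat, 32%nat, 2%nat, 32%nat));
  (1483, (4260100, 804536170190, 509866670800, 15%nat, 11%nat, 3%nat, 11%nat));
  (1487, (141372, 12945454, 7595596, 10%nat, 10%nat, 3%nat, 10%nat));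
  (1489, (21312, -288131772, -203707112, 11%nat, 8%nat, 4%nat, 8%nat));
  (1493, (306912, -5726616, -4049016, 7%nat, 10%nat, 3%nat, 10%nat));
  (1499, (19604, -1208484646, -702149588, 12%nat, 7%nat, 5%nat, 7%nat));
  (1511, (2079360, -14941116, -10824804, 8%nat, 12%nat, 3%nat, 12%nat));
  (1523, (4682892, -3097272, -2190074, 7%nat, 12%nat, 2%nat, 12%nat));
  (1531, (260, -29630, -21434, 8%nat, 5%nat, 2%nat, 5%nat));
  (1543, (5442137123397711021, 3643349826551, 2577593199026, 6%nat, 32%nat, 1%nat, 32%nat));
  (1549, (207590460, 34488450, 21757254, 7%nat, 16%nat, 1%nat, 16%nat));
  (1553, (3406006317, -1553624205, -898040886, 9%nat, 18%nat, 5%nat, 18%nat));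
  (1559, (3360, 496074634, 306527462, 16%nat, 6%nat, 3%nat, 6%nat));
  (1567, (2090912, -259075576, -160203812, 12%nat, 12%nat, 2%nat, 12%nat));
  (1571, (21900, 3536778, 2076862, 10%nat, 8%nat, 3%nat, 8%nat));
  (1579, (9797, -16696405, -9704534, 11%nat, 8%nat, 6%nat, 8%nat));
  (1583, (343400, 1681360, 1060610, 7%nat, 11%nat, 1%nat, 11%nat));
  (1597, (82147584992, 527188848, 372944216, 6%nat, 20%nat, 1%nat, 20%nat));
  (1601, (16639710021, 18547997721, 11754545202, 10%nat, 18%nat, 3%nat, 18%nat));
  (1607, (96, -19321236, -11168650, 12%nat, 4%nat, 2%nat, 4%nat));
  (1609, (40, 2744210, 1940454, 9%nat, 3%nat, 3%nat, 3%nat));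
  (1613, (221, -599331, -351634, 10%nat, 4%nat, 2%nat, 4%nat));
  (1619, (3725, 148847, 93902, 7%nat, 7%nat, 1%nat, 7%nat));
  (1621, (6720, 4107992, 2904832, 8%nat, 6%nat, 3%nat, 6%nat));
  (1627, (3968697481277, 118432936921, 83264806538, 9%nat, 24%nat, 3%nat, 24%nat));
  (1637, (1908684992011858917, -2208617018211, -1352126532758, 8%nat, 36%nat, 2%nat, 36%nat));
  (1657, (4682892, 2221212468, 1282514686, 11%nat, 12%nat, 5%nat, 12%nat));
  (1663, (40964582528168, -439565174168, -277187848852, 9%nat, 27%nat, 2%nat, 27%nat));
  (1667, (329349900, 402549230, 293892100, 10%nat, 18%nat, 3%nat, 18%nat));
  (1669, (271717200229, 810024991, 573071178, 6%nat, 21%nat, 1%nat, 21%nat));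
  (1693, (358033728021764991534148, -32219089706283678, -23318004397861636, 10%nat, 47%nat, 3%nat, 39%nat));
  (1697, (51475502177453, -98565735073, -71436542054, 9%nat, 25%nat, 2%nat, 25%nat));
  (1699, (724205, 1487477, 873286, 8%nat, 11%nat, 1%nat, 11%nat));
  (1709, (7565, 281096347, 162488302, 14%nat, 6%nat, 4%nat, 6%nat));
  (1721, (66961485, -19834137, -12298266, 8%nat, 14%nat, 2%nat, 14%nat));
  (1723, (82948, -21984042, -12874256, 10%nat, 11%nat, 2%nat, 11%nat));
  (1733, (40644576029, -915344423, -536103550, 7%nat, 19%nat, 2%nat, 19%nat));
  (1741, (23046276096, -368208960, -260230752, 7%nat, 20%nat, 2%nat, 20%nat));
  (1747, (1786307094788, 4111084186, 2593253788, 7%nat, 23%nat, 1%nat, 23%nat));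
  (1753, (765629, 139518643, 86265130, 12%nat, 11%nat, 3%nat, 11%nat));
  (1759, (3766044796904, 6100511832, 3848234660, 7%nat, 23%nat, 1%nat, 23%nat));
  (1777, (25604, -27984256282, -19788281060, 14%nat, 9%nat, 2%nat, 9%nat));
  (1783, (18229, 3435245, 2107506, 9%nat, 7%nat, 3%nat, 7%nat));
  (1787, (3604, 4219682, 2609020, 11%nat, 7%nat, 3%nat, 7%nat));
  (1789, (1658948, 188967566, 138185938, 10%nat, 11%nat, 3%nat, 11%nat));
  (1801, (29181600, -7874042092, -4884531722, 15%nat, 14%nat, 6%nat, 14%nat));
  (1811, (134693, -927589, -655582, 7%nat, 9%nat, 2%nat, 9%nat));
  (1823, (19604, -361118, -255220, 7%nat, 7%nat, 2%nat, 7%nat));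
  (1831, (2676500, -3600860, -2545090, 6%nat, 13%nat, 2%nat, 13%nat));
  (1847, (217152, -20190946, -14779694, 10%nat, 12%nat, 2%nat, 12%nat));
  (1861, (5436997700, 9823067890, 6194487380, 9%nat, 17%nat, 4%nat, 17%nat));
  (1867, (3443459757, 172230057, 101165262, 8%nat, 18%nat, 1%nat, 18%nat));
  (1871, (7400, -106239244, -74806322, 12%nat, 7%nat, 5%nat, 7%nat));
  (1873, (15804009800, -21955125120, -13464491290, 10%nat, 19%nat, 2%nat, 19%nat));
  (1877, (1517, -172779, -108866, 9%nat, 6%nat, 2%nat, 6%nat));
  (1879, (40, 13251512, 9331114, 11%nat, 3%nat, 5%nat, 3%nat));
  (1889, (343400, 47384940, 29883980, 10%nat, 11%nat, 3%nat, 11%nat));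
  (1901, (724205, -9990135, -6299914, 9%nat, 11%nat, 2%nat, 11%nat));
  (1907, (19604, 223266602, 138043916, 14%nat, 7%nat, 5%nat, 7%nat));
  (1913, (33952897760660637, 324371289591, 229468784334, 6%nat, 30%nat, 1%nat, 30%nat));
  (1931, (1600221, 1088478661, 639064450, 11%nat, 10%nat, 3%nat, 10%nat));
  (1933, (145853925, 37048365, 23369970, 7%nat, 18%nat, 1%nat, 18%nat));
  (1949, (65658605, 14882929, 10528498, 6%nat, 14%nat, 1%nat, 14%nat));
  (1951, (186847766777525, 443119143055, 279481011434, 9%nat, 28%nat, 3%nat, 28%nat));
  (1973, (8468, 161762, 114434, 6%nat, 7%nat, 1%nat, 7%nat));
  (1979, (490223877, 80374201431, 50684141294, 11%nat, 16%nat, 5%nat, 16%nat));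
  (1987, (308021, -376188769, -271277162, 11%nat, 10%nat, 4%nat, 10%nat));
  (1993, (162001988, -10573637122, -6667748912, 10%nat, 15%nat, 4%nat, 15%nat));
  (1997, (3604, -3820934, -2340484, 11%nat, 7%nat, 2%nat, 7%nat));
  (1999, (329472, 1175208, 743628, 8%nat, 10%nat, 1%nat, 10%nat))
]%Z.

Definition lookup (p : Z) := find (fun e => (fst e =? p)%Z) certs.

Definition p_ok (p : Z) : bool :=
  (p =? 67)%Z || (p <? 2)%Z ||
  match lookup p with Some (_, c) => cert_ok p c | None => false end || hasdiv p.




Lemma all_ok_true : zall 0 2000 p_ok = true.
Proof. vm_compute. reflexivity. Qed.

Lemma exists_cert : forall p, prime p -> (p < 2000)%Z -> p <> 67%Z ->
  exists xi, irrational xi /\ eventually_1_2 xi /\ eventually_1_2 (IZR p * xi).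
Proof.
  intros p Hp Hlt Hne.
  assert (Hp1 : (1 < p)%Z) by (destruct Hp; auto).
  assert (E2000 : Z.of_nat 2000 = 2000%Z) by reflexivity.
  assert (Hr : (0 <= p < 0 + Z.of_nat 2000)%Z) by (rewrite E2000; lia).
  pose proof (zall_spec _ _ _ all_ok_true p Hr) as H. unfold p_ok in H.
  repeat rewrite orb_true_iff in H.
  destruct H as [[[H|H]|H]|H].
  - apply Z.eqb_eq in H. contradiction.
  - apply Z.ltb_lt in H. lia.
  - destruct (lookup p) as [[_ c]|]; [|discriminate]. eapply cert_sound; eauto.
  - exfalso. exact (hasdiv_not_prime p H Hp).
Qed.


Lemma search : forall (f : nat -> Z) J t K, (f J <= t)%Z -> (t < f (J + K)%nat)%Z ->
  exists m, (J <= m)%nat /\ (f m <= t < f (S m))%Z.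
Proof.
  intros f J t K H1. induction K; intros H2.
  - rewrite Nat.add_0_r in H2. lia.
  - destruct (Z_lt_le_dec t (f (J + K)%nat)) as [L|L].
    + apply IHK; auto.
    + exists (J + K)%nat. split; [lia|]. split; auto.
      replace (S (J + K)) with (J + S K)%nat by lia. auto.
Qed.

Lemma side_bounds : forall z x (p p' q q' : Z), 1 < x -> (1 <= q)%Z -> (0 <= q')%Z ->
  z * (IZR q * x + IZR q') = IZR p * x + IZR p' ->
  (p * q' - p' * q = 1 \/ p * q' - p' * q = -1)%Z ->
  Rabs (IZR p - z * IZR q) * IZR q <= 1 /\ Rabs (IZR p' - z * IZR q') * IZR q <= 1.
Proof.
  intros z x p p' q q' Hx Hq Hq' Hr Hd.
  assert (Hdet : Rabs (IZR (p * q' - p' * q)) = 1).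
  { destruct Hd as [E|E]; rewrite E; [rewrite Rabs_right | rewrite Rabs_left]; lra. }
  rewrite minus_IZR, !mult_IZR in Hdet.
  apply IZR_le in Hq. apply IZR_le in Hq'. simpl in Hq.
  set (D := IZR q * x + IZR q') in *.
  assert (HD : IZR q <= D) by (unfold D; nra).
  set (e := IZR p - z * IZR q). set (e' := IZR p' - z * IZR q').
  assert (I1 : e * D = IZR p * IZR q' - IZR p' * IZR q).
  { assert (Id : e * D - (IZR p * IZR q' - IZR p' * IZR q) = - IZR q * (z * D - (IZR p * x + IZR p')))
      by (unfold e, D; ring). rewrite Hr in Id. lra. }
  assert (I2 : e' * D = - x * (IZR p * IZR q' - IZR p' * IZR q)).
  { assert (Id : e' * D + x * (IZR p * IZR q' - IZR p' * IZR q) = IZR q' * (IZR p * x + IZR p' - z * D))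
      by (unfold e', D; ring). rewrite Hr in Id. lra. }
  assert (A1 : Rabs e * D = 1).
  { rewrite <- Hdet, <- I1, Rabs_mult. rewrite (Rabs_pos_eq D); lra. }
  assert (A2 : Rabs e' * D = x).
  { replace (Rabs e' * D) with (Rabs (e' * D)) by (rewrite Rabs_mult, (Rabs_pos_eq D); lra).
    rewrite I2, Rabs_mult, Rabs_Ropp, Hdet, (Rabs_pos_eq x); lra. }
  pose proof (Rabs_pos e). pose proof (Rabs_pos e').
  split.
  - nra.
  - assert (T1 : Rabs e' * (IZR q * x) <= Rabs e' * D)
      by (apply Rmult_le_compat_l; auto; unfold D; lra).
    apply Rmult_le_reg_r with x; [lra|]. rewrite Rmult_assoc. lra.
Qed.

Lemma bnd_core : forall e E s t c1 c2 : R, 0 <= s -> 0 <= t ->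
  Rabs e * s <= c1 -> Rabs E * t <= c2 -> Rabs (67 * e * s - E * t) <= 67 * c1 + c2.
Proof.
  intros e E s t c1 c2 Hs Ht H1 H2.
  unfold Rminus. eapply Rle_trans; [apply Rabs_triang|].
  rewrite Rabs_Ropp, !Rabs_mult, (Rabs_pos_eq 67), (Rabs_pos_eq s), (Rabs_pos_eq t); lra.
Qed.

Lemma abs_int : forall (z B : Z) (r : R), IZR z = r -> Rabs r < IZR (B + 1) -> (Z.abs z <= B)%Z.
Proof.
  intros z B r E H. rewrite <- E, <- abs_IZR in H. apply lt_IZR in H. lia.
Qed.

Lemma no67 : forall xi, eventually_1_2 xi -> eventually_1_2 (IZR 67 * xi) -> False.
Proof.
  intros xi H1 H2. set (eta := IZR 67 * xi) in *.
  pose proof H1 as [N1 HN1]. pose proof H2 as [N2 HN2].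
  set (J := Nat.max N2 2).
  set (t0 := (8 * cq eta J)%Z).
  assert (Ht0 : (0 <= t0)%Z).
  { unfold t0. pose proof (cq_facts eta H2 J ltac:(lia)). lia. }
  set (n := (Nat.max N1 2 + Z.to_nat t0 + 1)%nat).
  assert (Hn2 : (2 <= n)%nat) by (unfold n; lia).
  assert (HnN : (N1 <= n)%nat) by (unfold n; lia).
  assert (Hnt : (Z.of_nat n - 1 >= t0)%Z) by (unfold n; lia).
  assert (HJ2 : (2 <= J)%nat) by (unfold J; lia).
  assert (HJN : (N2 <= J)%nat) by (unfold J; lia).
  clearbody n J.
  destruct (cq_grow xi H1 n ltac:(lia)) as [Gq _].
  assert (Hqn : (t0 <= cq xi n)%Z) by lia.
  set (q := cq xi n) in *.
  destruct (search (fun k => 8 * cq eta k)%Z J q (Z.to_nat q) Hqn) as [m' [Hm' [S1 S2]]].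
  { destruct (cq_grow eta H2 (J + Z.to_nat q)%nat ltac:(lia)) as [G _]. lia. }
  set (m := S m').
  assert (Hm1 : (1 <= m)%nat) by (unfold m; lia).
  assert (HmN : (N2 <= m)%nat) by (unfold m; lia).
  destruct (conv_S_eqs eta m') as [_ [_ [EQ EQ']]].
  fold m in EQ, EQ'.
  assert (HQ3 : (cq eta m <= 3 * cq' eta m)%Z).
  { rewrite EQ'. apply cq_upper; auto; try lia. apply HN2. lia. }
  rewrite <- EQ' in S1. fold m in S2.
  set (p := cp xi n) in *. set (p' := cp' xi n) in *. set (q' := cq' xi n) in *.
  set (P := cp eta m) in *. set (P' := cp' eta m) in *.
  set (Q := cq eta m) in *. set (Q' := cq' eta m) in *.
  destruct (cq_facts xi H1 n ltac:(lia)) as [Fq Fq'].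
  destruct (cq_facts eta H2 m ltac:(lia)) as [FQ FQ'].
  pose proof (conv_rel xi H1 n) as Rx. pose proof (conv_rel eta H2 m) as Ry.
  pose proof (conv_det xi n) as Dx. pose proof (conv_det eta m) as Dy.
  fold p p' q q' in Rx, Dx. fold P P' Q Q' in Ry, Dy.
  destruct (tail_facts xi N1 H1 HN1 n ltac:(lia)) as [[Hx1 Hx2] _].
  destruct (tail_facts eta N2 H2 HN2 m ltac:(lia)) as [[Hy1 Hy2] _].
  set (x := cf_complete xi n) in *. set (y := cf_complete eta m) in *.
  set (A11 := (67 * p * Q' - P' * q)%Z).
  set (A12 := (67 * p' * Q' - P' * q')%Z).
  set (A21 := (P * q - 67 * p * Q)%Z).
  set (A22 := (P * q' - 67 * p' * Q)%Z).
  assert (Hrel : relA (A11, A12, A21, A22) x y).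
  { unfold relA, A11, A12, A21, A22. rewrite !minus_IZR, !mult_IZR.
    set (D := IZR q * x + IZR q').
    assert (Id : y * ((IZR P * IZR q - IZR 67 * IZR p * IZR Q) * x + (IZR P * IZR q' - IZR 67 * IZR p' * IZR Q))
      - ((IZR 67 * IZR p * IZR Q' - IZR P' * IZR q) * x + (IZR 67 * IZR p' * IZR Q' - IZR P' * IZR q')) =
      D * (IZR P * y + IZR P' - eta * (IZR Q * y + IZR Q'))
      + (IZR Q * y + IZR Q') * IZR 67 * (xi * D - (IZR p * x + IZR p'))) by (unfold eta, D; ring).
    unfold D in Id. rewrite Rx, <- Ry in Id. lra. }
  assert (Hdet : (A11 * A22 - A12 * A21 = 67 \/ A11 * A22 - A12 * A21 = -67)%Z).
  { assert (Id : (A11 * A22 - A12 * A21 = 67 * (p * q' - p' * q) * (P * Q' - P' * Q))%Z)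
      by (unfold A11, A12, A21, A22; ring).
    rewrite Id. destruct Dx as [E|E]; destruct Dy as [E'|E']; rewrite E, E'; lia. }
  assert (Hx1' : 1 < x) by lra. assert (Hy1' : 1 < y) by lra.
  assert (Fq'' : (0 <= q')%Z) by lia. assert (FQ'' : (0 <= Q')%Z) by lia.
  destruct (side_bounds xi x p p' q q' Hx1' Fq Fq'' Rx Dx) as [Be Be'].
  destruct (side_bounds eta y P P' Q Q' Hy1' FQ FQ'' Ry Dy) as [BE BE'].
  set (e := IZR p - xi * IZR q) in *. set (e' := IZR p' - xi * IZR q') in *.
  set (E := IZR P - eta * IZR Q) in *. set (E' := IZR P' - eta * IZR Q') in *.
  pose proof (Rabs_pos e) as Pe. pose proof (Rabs_pos e') as Pe'.
  pose proof (Rabs_pos E) as PE. pose proof (Rabs_pos E') as PE'.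
  apply IZR_le in S1. apply IZR_lt in S2. apply IZR_le in HQ3.
  rewrite !mult_IZR in S1, S2, HQ3.
  assert (Hq0 : 1 <= IZR q) by (apply IZR_le; lia).
  assert (Hq'0 : 0 <= IZR q') by (apply IZR_le; lia).
  assert (Hq'q : IZR q' <= IZR q) by (apply IZR_le; lia).
  assert (HQ0 : 1 <= IZR Q) by (apply IZR_le; lia).
  assert (HQ'0 : 0 <= IZR Q') by (apply IZR_le; lia).
  assert (C1 : Rabs e * IZR Q' <= 1/8) by nra.
  assert (C2 : Rabs e' * IZR Q' <= 1/8) by nra.
  assert (C3 : Rabs e * IZR Q <= 3/8) by nra.
  assert (C4 : Rabs e' * IZR Q <= 3/8) by nra.
  assert (C5 : Rabs E' * IZR q <= 8) by nra.
  assert (C6 : Rabs E' * IZR q' <= 8) by nra.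
  assert (C7 : Rabs E * IZR q <= 8) by nra.
  assert (C8 : Rabs E * IZR q' <= 8) by nra.
  assert (B11 : (Z.abs A11 <= 17)%Z).
  { apply (abs_int A11 17 (67 * e * IZR Q' - E' * IZR q)).
    - unfold A11, e, E', eta. rewrite !minus_IZR, !mult_IZR. ring.
    - eapply Rle_lt_trans; [apply bnd_core; eauto; lra|]. simpl. lra. }
  assert (B12 : (Z.abs A12 <= 17)%Z).
  { apply (abs_int A12 17 (67 * e' * IZR Q' - E' * IZR q')).
    - unfold A12, e', E', eta. rewrite !minus_IZR, !mult_IZR. ring.
    - eapply Rle_lt_trans; [apply bnd_core; eauto; lra|]. simpl. lra. }
  assert (B21 : (Z.abs A21 <= 34)%Z).
  { apply (abs_int A21 34 (- (67 * e * IZR Q - E * IZR q))).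
    - unfold A21, e, E, eta. rewrite !minus_IZR, !mult_IZR. ring.
    - rewrite Rabs_Ropp. eapply Rle_lt_trans; [apply bnd_core; eauto; lra|]. simpl. lra. }
  assert (B22 : (Z.abs A22 <= 34)%Z).
  { apply (abs_int A22 34 (- (67 * e' * IZR Q - E * IZR q'))).
    - unfold A22, e', E, eta. rewrite !minus_IZR, !mult_IZR. ring.
    - rewrite Rabs_Ropp. eapply Rle_lt_trans; [apply bnd_core; eauto; lra|]. simpl. lra. }
  pose proof (box_good A11 A12 A21 A22 B11 B12 B21 B22 Hdet) as Hg.
  apply (good_sound (cf_complete xi) (cf_complete eta) (cf_term xi) (cf_term eta) N1 N2)
    with (fuel := 40%nat) (A := (A11, A12, A21, A22)) (n := n) (m := m); auto; try lia.
  - intros k Hk. apply (tail_facts xi N1); auto.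
  - intros k Hk. destruct (tail_facts eta N2 H2 HN2 k Hk) as [_ [T1 T2]].
    split; auto.
Qed.


Theorem theorem1p3 :
  forall p : Z, prime p -> (p < 2000)%Z ->
    ((~ exists xi : R, irrational xi /\ eventually_1_2 xi /\
                       eventually_1_2 (IZR p * xi))
     <-> p = 67%Z).
Proof.
  intros p Hp Hlt. split.
  - intros H. destruct (Z.eq_dec p 67) as [E|E]; auto. exfalso. apply H.
    apply exists_cert; auto.
  - intros E [xi [_ [H1 H2]]]. subst p. exact (no67 xi H1 H2).
Qed.
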